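(* Let $f:\{-1,1\}^n\to\{-1,1\}$ be computable by a parity decision tree of depth $d$. Then $$\sum_{i=1}^n\hat f(i)\le\sqrt{2d}.$$
   Context: $\hat f(i)=\mathbf{E}_x[f(x)x_i]$ over uniform $x\in\{-1,1\}^n$. A parity decision tree is a rooted full binary tree whose internal nodes are labelled by subsets $S\subseteq[n]$, whose two outgoing edges are labelled $-1$ and $1$, and whose leaves are labelled by values in $\{-1,1\}$; an input $x$ follows from a node labelled $S$ the edge labelled $\prod_{i\in S}x_i$. It computes $f$ if every input $x$ reaches a leaf labelled $f(x)$; its depth is the maximum number of internal nodes on a root-to-leaf path. *)

(* Defs.v *)
From mathcomp Require Import all_boot all_order all_algebra.
Set Implicit Arguments. Unset Strict Implicit. Unset Printing Implicit Defensive.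
Import Order.TTheory GRing.Theory Num.Theory.
Local Open Scope ring_scope.

(* Points of the hypercube {-1,1}^n are encoded as x : {ffun 'I_n -> bool};
   coordinate i has value (-1)^(x i), i.e. true ↦ -1, false ↦ 1. *)
Definition cube (n : nat) := {ffun 'I_n -> bool}.

Definition coord {R : nzRingType} {n : nat} (x : cube n) (i : 'I_n) : R :=
  (-1) ^+ x i.

Definition parity {R : nzRingType} {n : nat} (S : {set 'I_n}) (x : cube n) : R :=
  \prod_(i in S) coord x i.

Inductive pdt (R : Type) (n : nat) : Type :=
| PLeaf : R -> pdt R n
| PNode : {set 'I_n} -> pdt R n -> pdt R n -> pdt R n.
(* PNode S tm tp : tm = subtree along the edge labelled -1,
                   tp = subtree along the edge labelled  1. *)

Fixpoint pdt_wf {R : nzRingType} {n} (t : pdt R n) : Prop :=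
  match t with
  | PLeaf v => v = 1 \/ v = -1
  | PNode _ tm tp => pdt_wf tm /\ pdt_wf tp
  end.

Fixpoint pdt_eval {R : nzRingType} {n} (t : pdt R n) (x : cube n) : R :=
  match t with
  | PLeaf v => v
  | PNode T tm tp => if (parity T x : R) == -1 then pdt_eval tm x else pdt_eval tp x
  end.

Fixpoint pdt_depth {R : Type} {n} (t : pdt R n) : nat :=
  match t with
  | PLeaf _ => 0
  | PNode _ tm tp => (maxn (pdt_depth tm) (pdt_depth tp)).+1
  end.

Definition fourier1 {R : fieldType} {n} (f : cube n -> R) (i : 'I_n) : R :=
  (\sum_(x : cube n) f x * coord x i) / (#|{: cube n}|)%:R.

(* Main.v *)
Require Import Defs.
From mathcomp Require Import all_boot all_order all_algebra.
From mathcomp Require Import lra ring.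
Import Order.TTheory GRing.Theory Num.Theory.
Local Open Scope ring_scope.

Definition xor3 {n} (y z w : cube n) : cube n := [ffun i => y i (+) z i (+) w i].
Definition affine {n} (A : {set cube n}) :=
  forall y z w, y \in A -> z \in A -> w \in A -> xor3 y z w \in A.

Lemma xor3K {n} (y a b : cube n) : xor3 (xor3 y a b) a b = y.
Proof.
apply/ffunP=> i; rewrite !ffunE.
by case: (y i); case: (a i); case: (b i).
Qed.

Lemma sum_sign_bal {R : rcfType} {n} (A : {set cube n}) (g : cube n -> bool) a :
  affine A -> a \in A -> (forall y z w, g (xor3 y z w) = g y (+) g z (+) g w) ->
  \sum_(y in A) ((-1) ^+ g y : R) =
    if [forall y in A, g y == g a] then #|A|%:R * (-1)^+ g a else 0.
Proof.
move=> affA aA glin.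
case: ifP => [/forall_inP H | H].
  rewrite (eq_bigr (fun _ => (-1)^+ g a)); last by move=> y /H/eqP->.
  by rewrite sumr_const mulr_natl.
move/negbT: H; rewrite negb_forall_in => /exists_inP [b bA gb].
set S := \sum_(y in A) _.
have phiK : involutive (fun y => xor3 y a b) by move=> y; exact: xor3K.
have phiinj : injective (fun y => xor3 y a b) := inv_inj phiK.
have eS : S = - S.
  rewrite {1}/S (reindex_inj phiinj) /= -sumrN.
  apply: eq_big => [y|y yA].
    apply/idP/idP => [yA1|yA1]; last by apply: affA.
    by rewrite -(xor3K y a b); apply: affA.
  rewrite glin signr_addb signr_addb -mulrA.
  have -> : ((-1) ^+ g a * (-1) ^+ g b : R) = -1.
    rewrite -signr_addb; move: gb; case: (g a) => /=; case: (g b) => /= _ //.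
  by rewrite mulrN1.
have : S *+ 2 = 0 by rewrite mulr2n {1}eS addNr.
by move/eqP; rewrite mulrn_eq0 /= => /eqP.
Qed.

Definition frozen {n} (A : {set cube n}) (a : cube n) (i : 'I_n) :=
  [forall y in A, y i == a i].
Definition rel {n} (A : {set cube n}) (a : cube n) (i j : 'I_n) :=
  [forall y in A, (y i (+) y j) == (a i (+) a j)].
Definition ee {R : rcfType} {n} (A : {set cube n}) (a : cube n) (i j : 'I_n) : R :=
  (rel A a i j)%:R * (-1) ^+ (a i (+) a j).
Definition reps {n} (A : {set cube n}) (a : cube n) : {set 'I_n} :=
  [set r | ~~ frozen A a r & [forall j : 'I_n, (j < r)%N ==> ~~ rel A a j r]].

Lemma rel_refl {n} (A : {set cube n}) (a : cube n) (i : 'I_n) : rel A a i i.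
Proof. by apply/forall_inP => y _; rewrite !addbb. Qed.

Lemma rel_sym {n} (A : {set cube n}) (a : cube n) (i j : 'I_n) : rel A a i j = rel A a j i.
Proof. by apply: eq_forallb_in => y _; rewrite addbC [a i (+) _]addbC. Qed.

Lemma rel_trans {n} (A : {set cube n}) (a : cube n) (i j k : 'I_n) :
  rel A a i j -> rel A a j k -> rel A a i k.
Proof.
have E : forall u v w : bool, u (+) w = (u (+) v) (+) (v (+) w) by do 3!case.
move=> /forall_inP H1 /forall_inP H2; apply/forall_inP => y yA.
by rewrite (E _ (y j)) (E (a i) (a j)) (eqP (H1 y yA)) (eqP (H2 y yA)).
Qed.
Arguments rel_trans {n A a i j k}.

Lemma frozen_rel {n} (A : {set cube n}) (a : cube n) (i j : 'I_n) :
  frozen A a i -> rel A a i j = frozen A a j.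
Proof.
move=> /forall_inP H; apply: eq_forallb_in => y yA.
by rewrite (eqP (H y yA)); case: (a i); case: (a j); case: (y j).
Qed.

Lemma ee_sym {R : rcfType} {n} (A : {set cube n}) (a : cube n) (i j : 'I_n) :
  (ee A a i j : R) = ee A a j i.
Proof. by rewrite /ee rel_sym addbC. Qed.

Lemma ee_mul {R : rcfType} {n} (A : {set cube n}) (a : cube n) (i r j : 'I_n) :
  rel A a i r -> rel A a r j -> (ee A a i r : R) * ee A a r j = ee A a i j.
Proof.
move=> h1 h2; rewrite /ee h1 h2 (rel_trans h1 h2) !mul1r -signr_addb.
by congr (_ ^+ _); case: (a i); case: (a r); case: (a j).
Qed.

Lemma ee0 {R : rcfType} {n} (A : {set cube n}) (a : cube n) (i j : 'I_n) :
  ~~ rel A a i j -> (ee A a i j : R) = 0.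
Proof. by rewrite /ee => /negbTE ->; rewrite mul0r. Qed.

Lemma sum_coord {R : rcfType} {n} (A : {set cube n}) (a : cube n) (i : 'I_n) :
  affine A -> a \in A ->
  \sum_(y in A) (Defs.coord y i : R) = if frozen A a i then #|A|%:R * Defs.coord a i else 0.
Proof.
move=> affA aA; rewrite /Defs.coord (sum_sign_bal A (fun y : {ffun 'I_n -> bool} => y i) a) //.
by move=> y z w; rewrite ffunE.
Qed.

Lemma sum_coord2 {R : rcfType} {n} (A : {set cube n}) (a : cube n) (i j : 'I_n) :
  affine A -> a \in A ->
  \sum_(y in A) (Defs.coord y i * Defs.coord y j : R) = #|A|%:R * ee A a i j.
Proof.
move=> affA aA.
rewrite (eq_bigr (fun y : {ffun 'I_n -> bool} => (-1) ^+ (y i (+) y j))); last by move=> y _; rewrite signr_addb.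
rewrite (sum_sign_bal A (fun y : {ffun 'I_n -> bool} => y i (+) y j) a) //; last first.
  by move=> y z w; rewrite !ffunE; case: (y i); case: (y j); case: (z i); case: (z j); case: (w i); case: (w j).
rewrite /ee /rel; case: ifP => _; first by rewrite mul1r.
by rewrite mul0r mulr0.
Qed.
Arguments frozen_rel {n A a i j}.
Arguments ee_mul {R n A a i r j}.
Arguments ee0 {R n A a i j}.

Lemma rel_nf {n} (A : {set cube n}) (a : cube n) (i j : 'I_n) :
  rel A a i j -> ~~ frozen A a i -> ~~ frozen A a j.
Proof.
move=> h nfi; apply: contra nfi => fzj.
by rewrite -(frozen_rel fzj) rel_sym.
Qed.

Lemma rep_ex {n} (A : {set cube n}) (a : cube n) (i : 'I_n) :
  ~~ frozen A a i -> exists2 r, r \in reps A a & rel A a r i.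
Proof.
move=> nfi.
have [r relri minr] := @arg_minnP _ i (fun j => rel A a j i) (fun j => val j) (rel_refl A a i).
exists r => //; rewrite inE; apply/andP; split.
  by apply: contra nfi => fz; rewrite -(frozen_rel fz).
apply/forallP => j; apply/implyP => ltjr; apply/negP => relj.
by have := minr j (rel_trans relj relri); rewrite leqNgt ltjr.
Qed.
Arguments rep_ex {n A a i}.
Arguments rel_nf {n A a i j}.

Lemma reps_uniq {n} (A : {set cube n}) (a : cube n) (r r' : 'I_n) :
  r \in reps A a -> r' \in reps A a -> rel A a r r' -> r = r'.
Proof.
rewrite !inE => /andP[_ /forallP H] /andP[_ /forallP H'] h.
case: (ltngtP r r') => [lt|lt|eq]; last exact: val_inj.
  by move: (H' r); rewrite lt h.
by move: (H r'); rewrite lt rel_sym h.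
Qed.
Arguments reps_uniq {n A a r r'}.

Lemma key {R : rcfType} {n} (A : {set cube n}) (a : cube n) (i j : 'I_n) :
  ~~ frozen A a i -> \sum_(r in reps A a) (ee A a i r : R) * ee A a r j = ee A a i j.
Proof.
move=> nfi; have [r0 r0R rel0] := rep_ex nfi.
rewrite (bigD1 r0) //= big1 ?addr0; last first.
  move=> r /andP[rR rne]; rewrite ee0 ?mul0r //; apply: contra rne => relir.
  apply/eqP; apply: reps_uniq rR r0R _.
  by rewrite rel_sym in relir; apply: rel_trans relir _; rewrite rel_sym.
have rel0' : rel A a i r0 by rewrite rel_sym.
case: (boolP (rel A a r0 j)) => h; first exact: ee_mul.
rewrite (ee0 h) mulr0 ee0 //; apply: contra h => hij.
exact: rel_trans rel0 hij.
Qed.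
Arguments key {R n A a i} j.

Lemma ee_sq {R : rcfType} {n} (A : {set cube n}) (a : cube n) (i r : 'I_n) :
  (ee A a i r : R) * ee A a r i = (rel A a i r)%:R.
Proof.
rewrite /ee rel_sym mulrACA -natrM mulnb andbb -signr_addb.
by rewrite [a r (+) _]addbC addbb expr0 mulr1.
Qed.

Lemma ee_refl {R : rcfType} {n} (A : {set cube n}) (a : cube n) (i : 'I_n) :
  (ee A a i i : R) = 1.
Proof. by rewrite /ee rel_refl addbb mulr1. Qed.

Lemma count_reps {R : rcfType} {n} (A : {set cube n}) (a : cube n) (i : 'I_n) :
  ~~ frozen A a i -> \sum_(r in reps A a) ((rel A a i r)%:R : R) = 1.
Proof.
move=> nfi; rewrite -[X in _ = X](@ee_refl R _ A a i) -(key i nfi).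
by apply: eq_bigr => r _; rewrite ee_sq.
Qed.

Definition Lsum {R : rcfType} {n} (y : cube n) : R := \sum_(i < n) Defs.coord y i.
Definition mm {R : rcfType} {n} (A : {set cube n}) (a : cube n) (i : 'I_n) : R :=
  (frozen A a i)%:R * Defs.coord a i.

Lemma sumL {R : rcfType} {n} (A : {set cube n}) (a : cube n) :
  affine A -> a \in A ->
  \sum_(y in A) (Lsum y : R) = #|A|%:R * \sum_(i < n) mm A a i.
Proof.
move=> affA aA; rewrite /Lsum exchange_big mulr_sumr; apply: eq_bigr => i _.
rewrite (sum_coord _ _ _ affA aA) /mm; case: ifP => _; first by rewrite mul1r.
by rewrite mul0r mulr0.
Qed.

Lemma sumL2 {R : rcfType} {n} (A : {set cube n}) (a : cube n) :
  affine A -> a \in A ->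
  \sum_(y in A) (Lsum y : R) ^+ 2 = #|A|%:R * \sum_(i < n) \sum_(j < n) ee A a i j.
Proof.
move=> affA aA.
rewrite (eq_bigr (fun y => \sum_(i < n) \sum_(j < n) (Defs.coord y i * Defs.coord y j : R))); last first.
  move=> y _; rewrite expr2 /Lsum mulr_suml; apply: eq_bigr => i _; by rewrite mulr_sumr.
rewrite exchange_big mulr_sumr; apply: eq_bigr => i _.
rewrite exchange_big mulr_sumr; apply: eq_bigr => j _.
exact: sum_coord2 affA aA.
Qed.

Lemma decomp {R : rcfType} {n} (A : {set cube n}) (a : cube n) (i j : 'I_n) :
  (ee A a i j : R) = mm A a i * mm A a j + ((~~ frozen A a i) && (~~ frozen A a j))%:R * ee A a i j.
Proof.
rewrite /mm; case: (boolP (frozen A a i)) => fi; case: (boolP (frozen A a j)) => fj /=;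
  rewrite ?(mul0r, mul1r, addr0, add0r, mulr0) //.
- by rewrite /ee (frozen_rel fi) fj mul1r signr_addb.
- by rewrite ee0 // (frozen_rel fi).
- by rewrite ee0 // rel_sym (frozen_rel fj).
Qed.

Lemma sq_bound {R : rcfType} {n} (A : {set cube n}) (a : cube n) (r : 'I_n) :
  r \in reps A a ->
  2 - \sum_(i < n) (~~ frozen A a i)%:R * (rel A a i r)%:R <=
  (\sum_(i < n) (~~ frozen A a i)%:R * ee A a i r : R) ^+ 2.
Proof.
move=> rR; have nfr : ~~ frozen A a r by move: rR; rewrite inE => /andP[].
rewrite (bigD1 r) //= [X in _ <= X ^+ 2](bigD1 r) //= nfr rel_refl ee_refl !mul1r.
set u := \sum_(i | _) _; set t := \sum_(i | _) _.
have tu : `|t| <= u.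
  apply: le_trans (ler_norm_sum _ _ _) _; apply: ler_sum => i _.
  by rewrite normrM normr_nat /ee normrM normr_nat normr_sign mulr1.
have [k uk] : exists k : nat, u = k%:R.
  exists (\sum_(i < n | i != r) ((~~ frozen A a i) * (rel A a i r))%N).
  by rewrite natr_sum; apply: eq_bigr => i _; rewrite natrM.
case: k uk => [|k] uk.
  have t0 : t = 0 by apply/eqP; rewrite -normr_le0; apply: le_trans tu _; rewrite uk.
  by rewrite t0 uk addr0 expr1n /= mulr1n; lra.
have u1 : 1 <= u by rewrite uk ler1n.
by apply: le_trans (sqr_ge0 _); rewrite /= mulr1n; lra.
Qed.

Lemma Q_bound {R : rcfType} {n} (A : {set cube n}) (a : cube n) :
  2 * #|reps A a|%:R - n%:R <=
  \sum_(i < n) \sum_(j < n)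
     (((~~ frozen A a i) && (~~ frozen A a j))%:R * ee A a i j : R).
Proof.
set s := fun r i => ((~~ frozen A a i)%:R * ee A a i r : R).
have E : forall i j, (((~~ frozen A a i) && (~~ frozen A a j))%:R * ee A a i j : R)
    = \sum_(r in reps A a) s r i * s r j.
  move=> i j; rewrite /s; case: (boolP (frozen A a i)) => fi /=.
    by rewrite mul0r big1 // => r _; rewrite !mul0r.
  rewrite -(key j fi) mulr_sumr; apply: eq_bigr => r _.
  by rewrite mul1r [ee A a j r]ee_sym mulrCA.
rewrite (eq_bigr (fun i => \sum_(j < n) \sum_(r in reps A a) s r i * s r j)); last first.
  by move=> i _; apply: eq_bigr => j _; apply: E.
rewrite (eq_bigr (fun i => \sum_(r in reps A a) \sum_(j < n) s r i * s r j)); last first.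
  by move=> i _; rewrite exchange_big.
rewrite exchange_big /=.
rewrite (eq_bigr (fun r => (\sum_(i < n) s r i) ^+ 2)); last first.
  move=> r _; rewrite expr2 mulr_suml; apply: eq_bigr => i _; by rewrite mulr_sumr.
apply: (@le_trans _ _ (\sum_(r in reps A a) (2 - \sum_(i < n) (~~ frozen A a i)%:R * (rel A a i r)%:R))); last by apply: ler_sum => r rR; exact: sq_bound.
rewrite sumrB sumr_const.
rewrite exchange_big /=.
rewrite (eq_bigr (fun i => ((~~ frozen A a i)%:R : R))); last first.
  move=> i _; rewrite -mulr_sumr; case: (boolP (frozen A a i)) => fi /=.
    by rewrite !mul0r.
  by rewrite (@count_reps R _ A a i fi) mulr1.
have : \sum_(i < n) ((~~ frozen A a i)%:R : R) <= n%:R.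
  apply: le_trans (_ : \sum_(i < n) (1 : R) <= _).
    by apply: ler_sum => i _; case: (frozen A a i).
  by rewrite sumr_const card_ord.
rewrite -mulr_natl. lra.
Qed.

Lemma card_reps {n} (A : {set cube n}) (a : cube n) :
  a \in A -> (#|A| <= 2 ^ #|reps A a|)%N.
Proof.
move=> aA.
pose phi := fun y : cube n => [set r in reps A a | y r].
have inj : {in A &, injective phi}.
  move=> y z yA zA eq; apply/ffunP => i.
  have hr : forall r, r \in reps A a -> y r = z r.
    by move=> r rR; move/setP: eq => /(_ r); rewrite !inE; move: rR; rewrite inE => -> /=.
  case: (boolP (frozen A a i)) => [/forall_inP H | nf].
    by rewrite (eqP (H y yA)) (eqP (H z zA)).
  have [r rR /forall_inP H] := rep_ex nf.
  have e1 := eqP (H y yA); have e2 := eqP (H z zA).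
  rewrite (hr r rR) -e2 in e1.
  exact: addbI e1.
rewrite -(card_in_imset inj) -card_powerset; apply: subset_leq_card.
apply/subsetP => _ /imsetP [y _ ->]; rewrite powersetE.
by apply/subsetP => r; rewrite inE => /andP[].
Qed.

Lemma var_bound {R : rcfType} {n} (A : {set cube n}) (a : cube n) (m : nat) :
  affine A -> a \in A -> (2 ^ m <= #|A|)%N ->
  #|A|%:R ^+ 2 * (2 * m%:R - n%:R) <=
  #|A|%:R * \sum_(y in A) (Lsum y : R) ^+ 2 - (\sum_(y in A) (Lsum y : R)) ^+ 2.
Proof.
move=> affA aA hm.
rewrite (sumL2 _ _ affA aA) (sumL _ _ affA aA).
rewrite (eq_bigr (fun i => \sum_(j < n) (mm A a i * mm A a j +
   ((~~ frozen A a i) && (~~ frozen A a j))%:R * ee A a i j : R))); last first.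
  by move=> i _; apply: eq_bigr => j _; rewrite -decomp.
rewrite (eq_bigr (fun i => \sum_(j < n) (mm A a i * mm A a j : R) + \sum_(j < n)
   (((~~ frozen A a i) && (~~ frozen A a j))%:R * ee A a i j : R))); last first.
  by move=> i _; rewrite big_split.
rewrite big_split /=.
have -> : \sum_(i < n) \sum_(j < n) (mm A a i * mm A a j : R) = (\sum_(i < n) mm A a i) ^+ 2.
  rewrite expr2 mulr_suml; apply: eq_bigr => i _; by rewrite mulr_sumr.
set M := \sum_(i < n) mm A a i; set Q := \sum_(i < n) \sum_(j < n) _.
have hQ : 2 * m%:R - n%:R <= Q.
  apply: le_trans (Q_bound A a).
  have : (m <= #|reps A a|)%N.
    by rewrite -(@leq_exp2l 2) //; apply: leq_trans hm (card_reps A a aA).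
  rewrite -(ler_nat R) => h; lra.
have -> : #|A|%:R * (#|A|%:R * (M ^+ 2 + Q)) - (#|A|%:R * M) ^+ 2 = #|A|%:R ^+ 2 * Q.
  by rewrite exprMn; ring.
by apply: ler_wpM2l; rewrite ?exprn_ge0 ?ler0n.
Qed.
Definition pm1 {R : rcfType} (p : R) := p = 1 \/ p = -1.

Lemma parity_pm1 {R : rcfType} {n} (S : {set 'I_n}) (y : cube n) : pm1 (parity S y : R).
Proof.
rewrite /parity; apply: (big_ind (fun v : R => pm1 v)); first by left.
  by move=> u v [->|->] [->|->]; rewrite ?mulrNN ?mul1r ?mulr1; [left|right|right|left].
by move=> i _; rewrite /Defs.coord; case: (y i); [right; rewrite expr1 | left; rewrite expr0].
Qed.

Lemma pm1_eq {R : rcfType} (p q : R) : pm1 p -> pm1 q -> (p == -1) = (q == -1) -> p = q.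
Proof.
have h : (1 : R) == -1 = false by apply/negbTE; apply/eqP => h; have : (1 : R) = -1 := h; lra.
move=> [->|->] [->|->] //=; rewrite eqxx h //.
Qed.

Lemma pm1_neq {R : rcfType} (p q : R) : pm1 p -> pm1 q -> (p == -1) != (q == -1) -> p = - q.
Proof.
have h : (1 : R) == -1 = false by apply/negbTE; apply/eqP => h; have : (1 : R) = -1 := h; lra.
move=> [->|->] [->|->] //=; rewrite ?eqxx ?h ?opprK //.
Qed.

Lemma pm1_sq {R : rcfType} (p : R) : pm1 p -> p * p = 1.
Proof. by move=> [->|->]; rewrite ?mulr1 ?mulrNN ?mulr1. Qed.

Lemma parity_xor3 {R : rcfType} {n} (S : {set 'I_n}) (y z w : cube n) :
  (parity S (xor3 y z w) : R) = parity S y * parity S z * parity S w.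
Proof.
rewrite /parity -!big_split /=; apply: eq_bigr => i _.
by rewrite /Defs.coord ffunE !signr_addb.
Qed.

Definition half {R : rcfType} {n} (S : {set 'I_n}) (x : cube n) : {set cube n} :=
  [set y | (parity S y == -1 :> R) == (parity S x == -1 :> R)].

Fixpoint leafset {R : rcfType} {n} (t : pdt R n) (x : cube n) : {set cube n} :=
  match t with
  | PLeaf _ => setT
  | PNode T0 tm tp => half (R:=R) T0 x :&:
      (if parity T0 x == -1 :> R then leafset tm x else leafset tp x)
  end.

Lemma leafset_self {R : rcfType} {n} (t : pdt R n) x : x \in leafset t x.
Proof.
elim: t => [v|T0 tm IHm tp IHp] /=; first by rewrite inE.
by rewrite inE [_ \in half _ _]inE eqxx /=; case: ifP.
Qed.

Lemma half_eq {R : rcfType} {n} (S : {set 'I_n}) (x y : cube n) :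
  y \in half (R:=R) S x -> (parity S y == -1 :> R) = (parity S x == -1 :> R).
Proof. by rewrite inE => /eqP. Qed.
Arguments half_eq {R n S x y}.

Lemma leafset_eq {R : rcfType} {n} (t : pdt R n) x y :
  y \in leafset t x -> leafset t y = leafset t x.
Proof.
elim: t => [v|T0 tm IHm tp IHp] //= /setIP [hy hb].
have e := half_eq hy.
have -> : half (R:=R) T0 y = half (R:=R) T0 x by apply/setP => z; rewrite !inE e.
by rewrite e; case: ifP hb => _ hb; [rewrite IHm | rewrite IHp].
Qed.

Lemma leafset_sym {R : rcfType} {n} (t : pdt R n) x y :
  y \in leafset t x -> x \in leafset t y.
Proof. by move/leafset_eq => ->; apply: leafset_self. Qed.

Lemma leafset_eval {R : rcfType} {n} (t : pdt R n) x y :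
  y \in leafset t x -> pdt_eval t y = pdt_eval t x.
Proof.
elim: t => [v|T0 tm IHm tp IHp] //= /setIP [hy hb].
by rewrite (half_eq hy); case: ifP hb => _ hb; [rewrite IHm | rewrite IHp].
Qed.

Lemma affineT {n} : affine [set: cube n].
Proof. by move=> *; rewrite inE. Qed.

Lemma affineI {n} (A B : {set cube n}) : affine A -> affine B -> affine (A :&: B).
Proof.
move=> hA hB y z w /setIP[yA yB] /setIP[zA zB] /setIP[wA wB].
by rewrite inE hA ?hB.
Qed.

Lemma affine_half {R : rcfType} {n} (S : {set 'I_n}) x : affine (half (R:=R) S x).
Proof.
move=> y z w hy hz hw; rewrite inE parity_xor3.
have py := pm1_eq _ _ (parity_pm1 S y) (parity_pm1 S x) (half_eq hy).
have pz := pm1_eq _ _ (parity_pm1 S z) (parity_pm1 S x) (half_eq hz).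
have pw := pm1_eq _ _ (parity_pm1 S w) (parity_pm1 S x) (half_eq hw).
by rewrite py pz pw (pm1_sq _ (parity_pm1 S x)) mul1r.
Qed.

Lemma affine_leafset {R : rcfType} {n} (t : pdt R n) x : affine (leafset t x).
Proof.
elim: t => [v|T0 tm IHm tp IHp] /=; first exact: affineT.
by apply: affineI; [exact: affine_half | case: ifP].
Qed.

Lemma halving {R : rcfType} {n} (B : {set cube n}) (S : {set 'I_n}) x :
  affine B -> x \in B -> (#|B| <= 2 * #|B :&: half (R:=R) S x|)%N.
Proof.
move=> affB xB.
rewrite -(cardsID (half (R:=R) S x) B) mul2n -addnn leq_add2l.
case: (set_0Vmem (B :\: half (R:=R) S x)) => [->|[b /setDP [bB bH]]]; first by rewrite cards0.
pose phi := fun y => xor3 y x b.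
have inj : injective phi by apply: (can_inj (g := phi)) => y; exact: xor3K.
rewrite -(card_imset _ inj); apply: subset_leq_card; apply/subsetP => _ /imsetP [y /setDP [yB yH] ->].
rewrite inE affB //= inE parity_xor3.
have hb : (parity S b == -1 :> R) != (parity S x == -1 :> R) by move: bH; rewrite inE.
have hy : (parity S y == -1 :> R) != (parity S x == -1 :> R) by move: yH; rewrite inE.
rewrite (pm1_neq _ _ (parity_pm1 S y) (parity_pm1 S x) hy).
rewrite (pm1_neq _ _ (parity_pm1 S b) (parity_pm1 S x) hb).
by rewrite mulNr mulrNN (pm1_sq _ (parity_pm1 S x)) mul1r.
Qed.

Lemma leafset_card {R : rcfType} {n} (t : pdt R n) (B : {set cube n}) x :
  affine B -> x \in B -> (#|B| <= 2 ^ pdt_depth t * #|B :&: leafset t x|)%N.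
Proof.
elim: t B => [v|T0 tm IHm tp IHp] B affB xB /=; first by rewrite setIT mul1n.
rewrite setIA.
have affB' : affine (B :&: half (R:=R) T0 x) by apply: affineI => //; exact: affine_half.
have xB' : x \in B :&: half (R:=R) T0 x by rewrite inE xB inE eqxx.
apply: leq_trans (@halving R _ B T0 x affB xB) _.
rewrite expnS -mulnA leq_pmul2l //.
case: ifP => _.
  apply: leq_trans (IHm _ affB' xB') _; apply: leq_mul => //.
  by rewrite leq_pexp2l // leq_maxl.
apply: leq_trans (IHp _ affB' xB') _; apply: leq_mul => //.
by rewrite leq_pexp2l // leq_maxr.
Qed.

Arguments leafset_eq {R n t x y}.
Arguments leafset_sym {R n t x y}.
Arguments leafset_eval {R n t x y}.
Lemma invmuln {R : rcfType} (c : R) (k : nat) : k%:R != 0 :> R -> k%:R^-1 * c *+ k = c.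
Proof. move=> hk. rewrite -mulrnAl. rewrite -[(k%:R^-1) *+ k]mulr_natr mulVf ?mul1r //. Qed.

Lemma tower {R : rcfType} {n} (t : pdt R n) (h : cube n -> R) :
  \sum_x h x = \sum_x (#|leafset t x|%:R)^-1 * \sum_(y in leafset t x) h y.
Proof.
symmetry.
rewrite (eq_bigr (fun x => \sum_y ((y \in leafset t x)%:R * ((#|leafset t x|%:R)^-1 * h y)))); last first.
  move=> x _; rewrite mulr_sumr big_mkcond /=; apply: eq_bigr => y _.
  by case: ifP => _; rewrite ?mul1r ?mul0r.
rewrite exchange_big /=; apply: eq_bigr => y _.
rewrite (eq_bigr (fun x => (x \in leafset t y)%:R * ((#|leafset t y|%:R)^-1 * h y))); last first.
  move=> x _; case: (boolP (y \in leafset t x)) => hy.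
    by rewrite -(leafset_eq hy) (leafset_sym hy).
  have -> : (x \in leafset t y) = false.
    by apply/negbTE; apply: contra hy; apply: leafset_sym.
  by rewrite !mul0r.
rewrite (eq_bigr (fun x => if x \in leafset t y then (#|leafset t y|%:R)^-1 * h y else 0)); last by move=> x _; case: ifP => _; rewrite ?mul1r ?mul0r.
rewrite -big_mkcond /= sumr_const invmuln //.
rewrite pnatr_eq0 -lt0n; apply/card_gt0P; exists y; exact: leafset_self.
Qed.

Lemma sumL2T {R : rcfType} {n} :
  \sum_(y : cube n) (Lsum y : R) ^+ 2 = #|{: cube n}|%:R * n%:R.
Proof.
pose a : cube n := [ffun => false].
have := @sumL2 R n setT a affineT (in_setT a).
rewrite cardsT (eq_bigl (fun y => true)) => [->|y]; last by rewrite inE.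
congr (_ * _).
rewrite (eq_bigr (fun _ => 1)) ?sumr_const ?card_ord //.
move=> i _; rewrite (bigD1 i) //= ee_refl big1 ?addr0 // => j ji.
pose y : cube n := [ffun k => k == i].
apply: ee0; apply/negP => /forall_inP /(_ y (in_setT _)).
by rewrite /y /a !ffunE eqxx (negbTE ji).
Qed.

Lemma card_cube {n} : #|{: cube n}| = (2 ^ n)%N.
Proof. by rewrite card_ffun card_bool card_ord. Qed.

Theorem theorem3 (R : rcfType) (n d : nat) (f : cube n -> R)
  (hf : forall x, f x = 1 \/ f x = -1)
  (t : pdt R n) (hwf : pdt_wf t) (hdepth : pdt_depth t = d)
  (hcomp : forall x, pdt_eval t x = f x) :
  \sum_(i < n) fourier1 f i <= Num.sqrt (2 * d%:R).
Proof.
pose N := fun x => (#|leafset t x|%:R : R).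
pose mu := fun x => (N x)^-1 * \sum_(y in leafset t x) (Lsum y : R).
have Npos : forall x, 0 < N x.
  move=> x; rewrite /N ltr0n; apply/card_gt0P; exists x; exact: leafset_self.
have E0 : \sum_(i < n) fourier1 f i = (\sum_x f x * Lsum x) / #|{: cube n}|%:R.
  rewrite /fourier1 -mulr_suml; congr (_ * _).
  rewrite exchange_big; apply: eq_bigr => x _; by rewrite /Lsum mulr_sumr.
have E1 : \sum_x f x * Lsum x = \sum_x f x * mu x.
  rewrite (tower t); apply: eq_bigr => x _; rewrite /mu.
  rewrite (eq_bigr (fun y => f x * Lsum y)); last first.
    by move=> y hy; rewrite -!hcomp (leafset_eval hy).
  by rewrite -mulr_sumr mulrCA.
have hm : forall x, (2 ^ (n - d) <= #|leafset t x|)%N.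
  move=> x; have := @leafset_card R n t setT x affineT (in_setT x).
  rewrite setTI cardsT card_cube hdepth.
  case: (leqP d n) => hdn h.
    by rewrite -(leq_pmul2l (expn_gt0 2 d)) -expnD subnKC.
  have -> : (n - d = 0)%N by apply/eqP; rewrite subn_eq0 ltnW.
  by rewrite expn0 card_gt0; apply/set0Pn; exists x; exact: leafset_self.
have E2 : forall x, mu x ^+ 2 <= (N x)^-1 * \sum_(y in leafset t x) (Lsum y : R) ^+ 2
    - (2 * (n - d)%:R - n%:R).
  move=> x; have V := var_bound (R:=R) _ _ _ (affine_leafset t x) (leafset_self t x) (hm x).
  rewrite -subr_ge0.
  have Nx0 : N x != 0 by rewrite gt_eqF ?Npos.
  set S2 := \sum_(y in leafset t x) (Lsum y : R) ^+ 2 in V *; set S1 := \sum_(y in leafset t x) (Lsum y : R) in V *.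
  set c := (2 * _ - _) in V *.
  rewrite -/(N x) in V.
  have -> : (N x)^-1 * S2 - c - mu x ^+ 2 =
      ((N x)^-1) ^+ 2 * (N x * S2 - S1 ^+ 2 - N x ^+ 2 * c).
    by rewrite /mu -/S1; move: (N x) Nx0 => Nv Nv0; field.
  by apply: mulr_ge0; rewrite ?sqr_ge0 // subr_ge0.
have E3 : \sum_x mu x ^+ 2 <= #|{: cube n}|%:R * (2 * d%:R).
  apply: (@le_trans _ _ (\sum_x ((N x)^-1 * \sum_(y in leafset t x) (Lsum y : R) ^+ 2
    - (2 * (n - d)%:R - n%:R)))); first by apply: ler_sum => x _; exact: E2.
  have hc : forall (c : R) k, c *+ k = k%:R * c by move=> c k; rewrite mulr_natl.
  rewrite sumrB -(tower t (fun y => (Lsum y : R) ^+ 2)) sumL2T sumr_const (hc (2 * _ - _)).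
  rewrite (_ : #|xpredT| = #|{: cube n}|) // -mulrBr.
  apply: ler_wpM2l; first exact: ler0n.
  have h : (n <= d + (n - d))%N by rewrite -leq_subLR.
  move: h; rewrite -(ler_nat R) natrD => h; lra.
rewrite E0 E1.
set K := \sum_x f x * mu x.
have Ntpos : 0 < #|{: cube n}|%:R :> R by rewrite ltr0n card_cube expn_gt0.
have amgm : forall s : R, 0 < s -> 2 * s * K <= \sum_x mu x ^+ 2 + #|{: cube n}|%:R * s ^+ 2.
  move=> s s0; have -> : #|{: cube n}|%:R * s ^+ 2 = \sum_(x : cube n) s ^+ 2 by rewrite sumr_const mulr_natl.
  rewrite /K mulr_sumr -big_split /=.
  apply: ler_sum => x _.
  have hfx : f x ^+ 2 = 1 by case: (hf x) => ->; rewrite ?expr1n ?sqrrN ?expr1n.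
  move: (mu x) (f x) hfx => m fx hfx.
  rewrite -subr_ge0.
  have -> : m ^+ 2 + s ^+ 2 - 2 * s * (fx * m) = (m - s * fx) ^+ 2 + s ^+ 2 * (1 - fx ^+ 2) by ring.
  by rewrite hfx subrr mulr0 addr0 sqr_ge0.
case: (posnP d) => [d0|dpos].
  have mu0 : forall x, mu x = 0.
    move=> x; apply/eqP; rewrite -sqrf_eq0 eq_le sqr_ge0 andbT.
    apply: (@le_trans _ _ (\sum_y mu y ^+ 2)).
      rewrite (bigD1 x) //= lerDl; apply: sumr_ge0 => y _; exact: sqr_ge0.
    by apply: le_trans E3 _; rewrite d0 mulr0 mulr0.
  rewrite /K big1 ?mul0r ?sqrtr_ge0 // => x _; by rewrite mu0 mulr0.
set s := Num.sqrt (2 * d%:R).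
have s0 : 0 < s by rewrite sqrtr_gt0 mulr_gt0 // ltr0n.
have s2 : s ^+ 2 = 2 * d%:R by rewrite sqr_sqrtr // mulr_ge0 // ler0n.
have := amgm s s0; rewrite s2 => h.
have hK : K <= #|{: cube n}|%:R * s.
  have : 2 * s * K <= 2 * s * (#|{: cube n}|%:R * s).
    apply: le_trans h _; rewrite -s2; apply: le_trans (lerD E3 (lexx _)) _.
    suff -> : 2 * s * (#|{: cube n}|%:R * s) = #|{: cube n}|%:R * (2 * d%:R) + #|{: cube n}|%:R * s ^+ 2 by [].
    by rewrite -[2 * d%:R]s2 expr2; ring.
  by rewrite ler_pM2l // mulr_gt0.
by rewrite ler_pdivrMr // mulrC.
Qed.
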